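(* Let $k$ be a field and let $A$ and $B$ be $\mathbb Z$-graded, connected graded $k$-algebras with $A_1\neq 0$. Then $\mathrm{gr}\text{-}A\simeq\mathrm{gr}\text{-}B$ if and only if the associated $\mathbb Z$-algebras $\bar A$ and $\bar B$ are isomorphic as $\mathbb Z$-algebras (equivalently, if and only if there is an equivalence $\Phi:\mathrm{gr}\text{-}A\to\mathrm{gr}\text{-}B$ with $\Phi(A\langle n\rangle)\cong B\langle n\rangle$ for all $n\in\mathbb Z$).
   Context: A $\mathbb Z$-graded $k$-algebra $A$ is connected graded if $A=\bigoplus_{i\ge0}A_i$ and $A_0=k$. $\mathrm{gr}\text{-}A$ is the category of $\mathbb Z$-graded right $A$-modules with degree-preserving maps, and $M\langle n\rangle_i=M_{i-n}$. A $\mathbb Z$-algebra is a $k$-algebra $R=\bigoplus_{i,j\in\mathbb Z}R_{ij}$ (possibly without $1$) with $R_{ij}R_{jl}\subseteq R_{il}$, $R_{ij}R_{ml}=0$ for $j\neq m$, and each $R_{ii}$ containing an element $1_i$ that is a right identity on each $R_{ji}$ and a left identity on each $R_{ij}$; isomorphism of $\mathbb Z$-algebras is a $k$-algebra isomorphism with $1_i\mapsto 1_i$ for all $i$. For a $\mathbb Z$-graded ring $A$, $\bar A$ is the $\mathbb Z$-algebra with $\bar A_{ij}=A_{j-i}$ and multiplication induced from $A$. *)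

(* Defs.v *)
From HB Require Import structures.
From mathcomp Require Import all_boot all_order all_algebra.
Set Implicit Arguments. Unset Strict Implicit. Unset Printing Implicit Defensive.
Import GRing.Theory.
Local Open Scope ring_scope.

(* A Z-grading of a k-vector space V is encoded by its family of            *)
(* homogeneous-component projections q i : V -> V (internal direct sum).    *)

Section Defs.
Variable k : fieldType.

Definition lin (U V : lmodType k) (f : U -> V) : Prop :=
  forall (c : k) (u v : U), f (c *: u + v) = c *: f u + f v.

Definition is_grading (V : lmodType k) (q : int -> V -> V) : Prop :=
  [/\ forall i, lin (q i),
      forall i j v, q i (q j v) = (if i == j then q j v else 0) &
      forall v, exists s : seq int,
        [/\ uniq s, forall i, i \notin s -> q i v = 0 & v = \sum_(i <- s) q i v]].

Record gradedAlg := GradedAlg {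
  galg : algType k;
  gdeg : int -> galg -> galg;
  gdeg_grading : is_grading gdeg;
  gdeg_mul : forall i j (a b : galg), gdeg i a = a -> gdeg j b = b ->
                gdeg (i + j) (a * b) = a * b }.

Definition homog (A : gradedAlg) (i : int) (a : galg A) := @gdeg A i a = a.

Definition connected_graded (A : gradedAlg) : Prop :=
  (forall i : int, i < 0 -> forall a, @gdeg A i a = 0) /\
  (forall a, @homog A 0 a <-> exists c : k, a = c%:A).

Definition is_gmod (A : gradedAlg) (M : lmodType k)
    (act : M -> galg A -> M) (q : int -> M -> M) : Prop :=
  [/\ (forall a, lin (fun m => act m a)) /\ (forall m, lin (act m)),
      (forall m, act m 1 = m) /\ (forall m a b, act (act m a) b = act m (a * b)),
      is_grading q &
      forall i j m a, q i m = m -> @homog A j a -> q (i + j) (act m a) = act m a].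

Record gmod (A : gradedAlg) := GMod {
  gcar : lmodType k;
  gact : gcar -> galg A -> gcar;
  gq : int -> gcar -> gcar;
  gmodP : is_gmod gact gq }.

Record ghom (A : gradedAlg) (M N : gmod A) := GHom {
  ghf :> gcar M -> gcar N;
  ghP : [/\ lin ghf,
            forall m a, ghf (gact m a) = gact (ghf m) a &
            forall i m, ghf (@gq A M i m) = @gq A N i (ghf m)] }.

Definition giso (A : gradedAlg) (M N : gmod A) : Prop :=
  exists (f : ghom M N) (g : ghom N M),
    (forall x, g (f x) = x) /\ (forall y, f (g y) = y).

Record gfunctor (A B : gradedAlg) := GFunctor {
  fobj : gmod A -> gmod B;
  fmor : forall M N : gmod A, ghom M N -> ghom (fobj M) (fobj N) }.

Definition is_klin_functor (A B : gradedAlg) (F : gfunctor A B) : Prop :=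
  [/\ forall (M : gmod A) (h : ghom M M), (forall x, h x = x) ->
        forall y, fmor F h y = y,
      forall (M N P : gmod A) (f : ghom M N) (g : ghom N P) (h : ghom M P),
        (forall x, h x = g (f x)) ->
        forall y, fmor F h y = fmor F g (fmor F f y) &
      forall (M N : gmod A) (f g h : ghom M N) (c : k),
        (forall x, h x = c *: f x + g x) ->
        forall y, fmor F h y = c *: fmor F f y + fmor F g y].

Definition unit_iso (A B : gradedAlg) (F : gfunctor A B) (G : gfunctor B A) :=
  exists (eta : forall M : gmod A, ghom M (fobj G (fobj F M)))
         (eta' : forall M : gmod A, ghom (fobj G (fobj F M)) M),
    [/\ forall M x, eta' M (eta M x) = x,
        forall M y, eta M (eta' M y) = y &
        forall (M M' : gmod A) (f : ghom M M') x,
          eta M' (f x) = fmor G (fmor F f) (eta M x)].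

Definition is_equivalence (A B : gradedAlg) (F : gfunctor A B) : Prop :=
  is_klin_functor F /\
  exists G : gfunctor B A, [/\ is_klin_functor G, unit_iso F G & unit_iso G F].

Definition gr_equiv (A B : gradedAlg) : Prop :=
  exists F : gfunctor A B, is_equivalence F.

Section Shift.
Variables (A : gradedAlg) (n : int).

Lemma shift_is_gmod :
  @is_gmod A (galg A) (fun m a => m * a) (fun i => @gdeg A (i - n)).
Proof.
have [lq qq fs] := gdeg_grading A.
split.
- split=> [a c u v|m c u v]; first by rewrite mulrDl scalerAl.
  by rewrite mulrDr scalerAr.
- by split=> [m|m a b]; rewrite ?mulr1 ?mulrA.
- split=> [i|i j v|v]; first exact: lq.
    rewrite qq; have -> : (i - n == j - n) = (i == j).
      by apply/eqP/eqP => [/addIr|->].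
    by [].
  have [s [us ns vE]] := fs v.
  exists [seq i + n | i <- s]; split.
  + by rewrite map_inj_uniq // => x y /addIr.
  + move=> i Hi; rewrite ns //; apply: contra Hi => H; apply/mapP; exists (i - n) => //.
    by rewrite subrK.
  + by rewrite big_map {1}vE; apply: eq_bigr => i _; rewrite addrK.
- move=> i j m a Hm Ha; rewrite /homog in Ha.
  have -> : i + j - n = (i - n) + j by rewrite addrAC.
  exact: gdeg_mul.
Qed.

Definition shift : gmod A := @GMod A (galg A) _ _ shift_is_gmod.
End Shift.

(* ---- isomorphism of the Z-algebras \bar A and \bar B ----
   \bar A = (+)_{i,j} \bar A_{ij}, \bar A_{ij} = A_{j-i}, with multiplication
   \bar A_{ij} x \bar A_{jl} -> \bar A_{il} induced by A and local units
   1_i = 1 \in A_0 = \bar A_{ii}.  A k-algebra isomorphism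
   phi : \bar A -> \bar B with phi(1_i) = 1_i maps \bar A_{ij} = 1_i \bar A 1_j
   onto \bar B_{ij}, hence is the same as a family of k-linear bijections
   phi_ij : A_{j-i} -> B_{j-i} compatible with products and units. *)
Definition zbar_iso (A B : gradedAlg) : Prop :=
  exists phi : int -> int -> galg A -> galg B,
    [/\ forall i j, lin (phi i j),
        forall i j a, @homog A (j - i) a -> @homog B (j - i) (phi i j a),
        forall i j a a', @homog A (j - i) a -> @homog A (j - i) a' ->
          phi i j a = phi i j a' -> a = a',
        forall i j b, @homog B (j - i) b ->
          exists2 a, @homog A (j - i) a & phi i j a = b &
        (forall i j l a b, @homog A (j - i) a -> @homog A (l - j) b ->
           phi i l (a * b) = phi i j a * phi j l b) /\
        (forall i, phi i i 1 = 1)].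

End Defs.

(* Main.v *)
Require Import Defs.
From HB Require Import structures.
From mathcomp Require Import all_boot all_order all_algebra.
From mathcomp Require Import zify ring.
From Stdlib Require Import ClassicalEpsilon FunctionalExtensionality ProofIrrelevance Classical.
Set Implicit Arguments. Unset Strict Implicit. Unset Printing Implicit Defensive.
Import GRing.Theory Num.Theory.
Local Open Scope ring_scope.

Section Lin.
Variables (k : fieldType) (U V : lmodType k) (f : U -> V) (hf : lin f).
Lemma linD u v : f (u + v) = f u + f v.
Proof. by have := hf 1 u v; rewrite !scale1r. Qed.
Lemma lin0 : f 0 = 0.
Proof. have h := hf 1 0 0; rewrite !scale1r addr0 in h.
by apply: (addrI (f 0)); rewrite addr0 -h. Qed.
Lemma linZ c u : f (c *: u) = c *: f u.
Proof. by rewrite -[c *: u]addr0 hf lin0 addr0. Qed.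
Lemma linN u : f (- u) = - f u.
Proof. by rewrite -scaleN1r linZ scaleN1r. Qed.
Lemma linB u v : f (u - v) = f u - f v.
Proof. by rewrite linD linN. Qed.
Lemma lin_sum (I : Type) (s : seq I) (F : I -> U) :
  f (\sum_(i <- s) F i) = \sum_(i <- s) f (F i).
Proof.
elim: s => [|x s IH]; first by rewrite !big_nil lin0.
by rewrite !big_cons linD IH.
Qed.
End Lin.

Lemma lin_comp (k : fieldType) (U V W : lmodType k) (f : U -> V) (g : V -> W) :
  lin f -> lin g -> lin (fun x => g (f x)).
Proof. by move=> hf hg c u v; rewrite hf hg. Qed.

Section Sums.
Variable (V : zmodType).
Lemma sum_single (s : seq int) (F : int -> V) j : uniq s ->
  \sum_(i <- s) (if i == j then F i else 0) = if j \in s then F j else 0.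
Proof.
elim: s => [|x s IH] /=; first by rewrite big_nil.
case/andP=> xs us; rewrite big_cons IH // in_cons.
case: (eqVneq x j) => [<-|nxj] /=; last by rewrite add0r.
by rewrite (negPf xs) addr0.
Qed.

Lemma sum_supp (s t : seq int) (F : int -> V) : uniq s -> uniq t ->
  (forall i, i \notin s -> F i = 0) -> (forall i, i \notin t -> F i = 0) ->
  \sum_(i <- s) F i = \sum_(i <- t) F i.
Proof.
move=> us ut hs ht.
have e1 : \sum_(i <- s) F i = \sum_(i <- s | i \in t) F i.
  rewrite [RHS]big_mkcond; apply: eq_bigr => i _.
  by case: ifP => // /negbT /ht.
have e2 : \sum_(i <- t) F i = \sum_(i <- t | i \in s) F i.
  rewrite [RHS]big_mkcond; apply: eq_bigr => i _.
  by case: ifP => // /negbT /hs.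
rewrite e1 e2 -[LHS]big_filter -[RHS]big_filter; apply: perm_big; apply: uniq_perm; rewrite ?filter_uniq //.
by move=> i; rewrite !mem_filter andbC.
Qed.
End Sums.

Section Grading.
Variables (k : fieldType) (V : lmodType k) (q : int -> V -> V) (hq : is_grading q).
Lemma gr_lin i : lin (q i). Proof. by case: hq. Qed.
Lemma gr_qq i j v : q i (q j v) = if i == j then q j v else 0. Proof. by case: hq. Qed.
Lemma gr_idem i v : q i (q i v) = q i v. Proof. by rewrite gr_qq eqxx. Qed.
Lemma gr_homog i j v : q j v = v -> i != j -> q i v = 0.
Proof. by move=> <- /negPf nij; rewrite gr_qq nij. Qed.
Lemma gr_supp v : exists s : seq int,
        [/\ uniq s, forall i, i \notin s -> q i v = 0 & v = \sum_(i <- s) q i v].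
Proof. by case: hq. Qed.
Lemma gr_decomp (s : seq int) v : uniq s -> (forall i, i \notin s -> q i v = 0) ->
  v = \sum_(i <- s) q i v.
Proof.
move=> us hs; have [t [ut ht hv]] := gr_supp v.
rewrite {1}hv; apply: sum_supp => //.
Qed.
End Grading.

Lemma eq_sub_swap (t i d : int) : (t == i + d) = (d == t - i).
Proof. by rewrite [RHS]eq_sym subr_eq addrC. Qed.

Section Mod.
Variables (k : fieldType) (A : gradedAlg k).

Lemma gdeg_lin i : lin (@gdeg k A i). Proof. exact: gr_lin (gdeg_grading A) i. Qed.
Lemma gdeg_qq i j (v : galg A) : gdeg i (gdeg j v) = if i == j then gdeg j v else 0.
Proof. by have := gr_qq (gdeg_grading A) i j v; move=> ->. Qed.
Lemma gdeg_idem i (v : galg A) : gdeg i (gdeg i v) = gdeg i v.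
Proof. by have := gr_idem (gdeg_grading A) i v; move=> ->. Qed.

Section M.
Variable M : gmod A.
Lemma act_linl a : lin (fun m : gcar M => gact m a).
Proof. by case: (gmodP M) => [[l1 l2] _ _ _]. Qed.
Lemma act_linr (m : gcar M) : lin (gact m).
Proof. by case: (gmodP M) => [[l1 l2] _ _ _]. Qed.
Lemma act1 (m : gcar M) : gact m 1 = m.
Proof. by case: (gmodP M) => [_ [a1 aA] _ _]. Qed.
Lemma actA (m : gcar M) a b : gact (gact m a) b = gact m (a * b).
Proof. by case: (gmodP M) => [_ [a1 aA] _ _]. Qed.
Lemma gq_grading : is_grading (@gq _ _ M).
Proof. by case: (gmodP M). Qed.
Lemma gq_act i j (m : gcar M) a : gq i m = m -> homog j a -> gq (i + j) (gact m a) = gact m a.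
Proof. by case: (gmodP M) => [_ _ _ h]; apply: h. Qed.
Lemma gq_lin i : lin (@gq _ _ M i). Proof. exact: gr_lin gq_grading i. Qed.

Lemma gq_act_gen i t (m : gcar M) a : gq i m = m -> gq t (gact m a) = gact m (gdeg (t - i) a).
Proof.
move=> hm; have [s [us hs ha]] := gr_supp (gdeg_grading A) a.
rewrite {1}ha (lin_sum (act_linr m)) (lin_sum (gq_lin t)).
under eq_bigr => d _ do rewrite -{1}(gq_act hm (gdeg_idem d a)) (gr_qq gq_grading)
   (gq_act hm (gdeg_idem d a)) eq_sub_swap.
rewrite (sum_single (fun d => gact m (gdeg d a))) //.
by case: ifP => // /negbT /hs ->; rewrite (lin0 (act_linr m)).
Qed.
End M.

Section Ghom.
Variables (M N : gmod A).
Lemma gh_lin (f : ghom M N) : lin f. Proof. by case: (ghP f). Qed.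
Lemma gh_act (f : ghom M N) m a : f (gact m a) = gact (f m) a. Proof. by case: (ghP f). Qed.
Lemma gh_q (f : ghom M N) i m : f (gq i m) = gq i (f m). Proof. by case: (ghP f). Qed.
Lemma gh_homog (f : ghom M N) i m : gq i m = m -> gq i (f m) = f m.
Proof. by move=> h; rewrite -gh_q h. Qed.
Lemma gh0 (f : ghom M N) : f 0 = 0. Proof. exact: lin0 (gh_lin f). Qed.
Lemma gh_Z (f : ghom M N) c x : f (c *: x) = c *: f x.
Proof. have := (gh_lin f) c x 0; rewrite !addr0 gh0 addr0; exact. Qed.
Lemma gh_D (f : ghom M N) x y : f (x + y) = f x + f y.
Proof. have := (gh_lin f) 1 x y; rewrite !scale1r; exact. Qed.
Lemma gh_sum (f : ghom M N) (I : Type) (s : seq I) (F : I -> gcar M) :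
  f (\sum_(i <- s) F i) = \sum_(i <- s) f (F i).
Proof.
elim: s => [|i s IH]; first by rewrite !big_nil gh0.
by rewrite !big_cons gh_D IH.
Qed.

Lemma ghom_ext (f g : ghom M N) : (forall x, f x = g x) -> f = g.
Proof.
case: f g => f Pf [g Pg] /= E.
have ? := functional_extensionality _ _ E; subst g.
by rewrite (proof_irrelevance _ Pf Pg).
Qed.

End Ghom.
Section Comp.
Variables (M N P : gmod A).
Definition compg (f : ghom M N) (g : ghom N P) : ghom M P.
Proof.
refine (@GHom k A M P (fun x => g (f x)) _).
split.
- by move=> c u v; rewrite (gh_lin f) (gh_lin g).
- by move=> m a; rewrite !gh_act.
- by move=> i m; rewrite !gh_q.
Defined.
Lemma compgE f g x : compg f g x = g (f x). Proof. by []. Qed.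

Definition lcg (c : k) (f g : ghom M N) : ghom M N.
Proof.
refine (@GHom k A M N (fun x => c *: f x + g x) _).
split.
- move=> d u v; rewrite (gh_lin f) (gh_lin g) !scalerDr !scalerA mulrC addrACA.
  done.
- by move=> m a; rewrite (act_linl a) !gh_act.
- by move=> i m; rewrite (gq_lin i) !gh_q.
Defined.
Lemma lcgE c f g x : lcg c f g x = c *: f x + g x. Proof. by []. Qed.

Definition zerog : ghom M N.
Proof.
refine (@GHom k A M N (fun x => 0) _).
split.
- by move=> d u v; rewrite scaler0 addr0.
- by move=> m a; rewrite (lin0 (act_linl a)).
- by move=> i m; rewrite (lin0 (gq_lin i)).
Defined.

Lemma zerogE x : zerog x = 0. Proof. by []. Qed.
Definition idg : ghom M M.
Proof.
refine (@GHom k A M M (fun x => x) _).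
by split.
Defined.
Lemma idgE x : idg x = x. Proof. by []. Qed.
End Comp.

Section Emap.
Variables (M : gmod A) (m : int) (x : gcar M).
Definition emap : ghom (shift A m) M.
Proof.
refine (@GHom k A (shift A m) M (fun b => gact (gq m x) b) _).
split.
- exact: act_linr.
- by move=> b a /=; rewrite actA.
- move=> i b /=; rewrite (gq_act_gen _ _ (gr_idem (gq_grading M) m x)) //.
Defined.
Lemma emapE b : emap b = gact (gq m x) b. Proof. by []. Qed.
Lemma emap1 : emap 1 = gq m x. Proof. by rewrite emapE act1. Qed.
End Emap.

Lemma shift_det (M : gmod A) m (h : ghom (shift A m) M) b : h b = gact (h 1) b.
Proof. by rewrite -(gh_act h) /= mul1r. Qed.

Section Conn.
Hypothesis hA : connected_graded A.
Lemma one_homog : homog 0 (1 : galg A).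
Proof. by apply/(proj2 hA 1); exists 1; rewrite scale1r. Qed.
Lemma shift1 m : gq m (1 : gcar (shift A m)) = 1.
Proof. by rewrite /= subrr one_homog. Qed.
Lemma shift_h1 (M : gmod A) m (h : ghom (shift A m) M) : gq m (h 1) = h 1.
Proof. by rewrite -gh_q shift1. Qed.
Lemma shift_E (M : gmod A) m (h : ghom (shift A m) M) : h = emap m (h 1).
Proof. by apply: ghom_ext => b; rewrite emapE shift_h1 shift_det. Qed.
Lemma alg_inj (c d : k) : c%:A = d%:A :> galg A -> c = d.
Proof.
move/eqP; rewrite -subr_eq0 -scalerBl scaler_eq0 oner_eq0 orbF subr_eq0.
by move/eqP.
Qed.
Lemma shift_end m (h : ghom (shift A m) (shift A m)) : exists c : k, forall x, h x = c *: x.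
Proof.
have h1 := shift_h1 h; rewrite /= subrr in h1.
have [c hc] := (proj1 (proj2 hA (h 1)) h1).
by exists c => x; rewrite shift_det hc /= mulr_algl.
Qed.
Lemma shift_neg m m' (h : ghom (shift A m') (shift A m)) : m' < m -> forall x, h x = 0.
Proof.
move=> lt x; have h1 := shift_h1 h; rewrite /= in h1.
rewrite (proj1 hA (m' - m)) in h1; last by rewrite subr_lt0.
by rewrite shift_det -h1 /= mul0r.
Qed.
End Conn.
End Mod.

Section Iso.
Variables (k : fieldType) (A : gradedAlg k).
Lemma giso_refl (M : gmod A) : giso M M.
Proof. by exists (idg M), (idg M). Qed.
Lemma giso_sym (M N : gmod A) : giso M N -> giso N M.
Proof. by case=> f [g [h1 h2]]; exists g, f. Qed.
Lemma giso_trans (M N P : gmod A) : giso M N -> giso N P -> giso M P.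
Proof.
case=> f [g [h1 h2]] [f' [g' [h1' h2']]].
exists (compg f f'), (compg g' g); split=> x; rewrite !compgE.
  by rewrite h1' h1.
by rewrite h2 h2'.
Qed.
End Iso.

Section Fun.
Variables (k : fieldType) (A B : gradedAlg k) (F : gfunctor A B).
Hypothesis hF : is_klin_functor F.
Lemma klin_id (M : gmod A) (h : ghom M M) : (forall x, h x = x) -> forall y, fmor F h y = y.
Proof. by case: hF => h1 _ _; apply: h1. Qed.
Lemma klin_comp (M N P : gmod A) (f : ghom M N) (g : ghom N P) (h : ghom M P) :
  (forall x, h x = g (f x)) -> forall y, fmor F h y = fmor F g (fmor F f y).
Proof. by case: hF => _ h2 _; apply: h2. Qed.
Lemma klin_lc (M N : gmod A) (f g h : ghom M N) (c : k) :
  (forall x, h x = c *: f x + g x) -> forall y, fmor F h y = c *: fmor F f y + fmor F g y.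
Proof. by case: hF => _ _ h3; apply: h3. Qed.
Lemma klin_zero (M N : gmod A) (h : ghom M N) : (forall x, h x = 0) -> forall y, fmor F h y = 0.
Proof.
move=> hx y; have := klin_lc (f:=h) (g:=h) (h:=h) (c:=-1).
move=> ->; first by rewrite scaleN1r addNr.
by move=> x; rewrite hx scaler0 addr0.
Qed.
Lemma klin_compg (M N P : gmod A) (f : ghom M N) (g : ghom N P) y :
  fmor F (compg f g) y = fmor F g (fmor F f y).
Proof. exact: klin_comp. Qed.
Lemma fiso (M N : gmod A) : giso M N -> giso (fobj F M) (fobj F N).
Proof.
case=> f [g [h1 h2]]; exists (fmor F f), (fmor F g); split=> y.
  by rewrite -klin_compg; apply: klin_id => x; rewrite compgE h1.
by rewrite -klin_compg; apply: klin_id => x; rewrite compgE h2.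
Qed.
End Fun.

Section Equiv.
Variables (k : fieldType) (A B : gradedAlg k) (F : gfunctor A B) (G : gfunctor B A).
Lemma faithful : unit_iso F G -> forall (M N : gmod A) (f g : ghom M N),
  (forall y, fmor F f y = fmor F g y) -> forall x, f x = g x.
Proof.
case=> eta [eta' [h1 h2 hn]] M N f g e x.
have e' : fmor F f = fmor F g by apply: ghom_ext.
by rewrite -(h1 N (f x)) -(h1 N (g x)) !hn e'.
Qed.
Lemma zero_reflect : unit_iso F G -> is_klin_functor G -> forall (M N : gmod A) (f : ghom M N),
  (forall y, fmor F f y = 0) -> forall x, f x = 0.
Proof.
case=> eta [eta' [h1 h2 hn]] hG M N f e x.
by rewrite -(h1 N (f x)) hn (klin_zero hG (h := fmor F f)) // gh0.
Qed.
Lemma unit_giso : unit_iso F G -> forall M, giso M (fobj G (fobj F M)).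
Proof. by case=> eta [eta' [h1 h2 hn]] M; exists (eta M), (eta' M). Qed.
End Equiv.

Section Equiv2.
Variables (k : fieldType) (A B : gradedAlg k) (F : gfunctor A B) (G : gfunctor B A).
Hypotheses (U : unit_iso F G) (U' : unit_iso G F).
Lemma full (M N : gmod A) (h : ghom (fobj F M) (fobj F N)) :
  exists f : ghom M N, forall y, fmor F f y = h y.
Proof.
have [eta [eta' [h1 h2 hn]]] := U.
exists (compg (eta M) (compg (fmor G h) (eta' N))).
apply: (faithful U') => z.
rewrite -(h2 M z) -hn !compgE.
by rewrite h2.
Qed.
Hypothesis hF : is_klin_functor F.
Lemma iso_reflect (M N : gmod A) : giso (fobj F M) (fobj F N) -> giso M N.
Proof.
case=> u [v [h1 h2]].
have [f hf] := full u; have [g hg] := full v.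
exists f, g; split=> x.
  have e : forall x, compg f g x = idg M x.
    by apply: (faithful U) => y; rewrite klin_compg // hf hg h1 (klin_id hF).
  exact: e x.
have e : forall x, compg g f x = idg N x.
  by apply: (faithful U) => y; rewrite klin_compg // hf hg h2 (klin_id hF).
exact: e x.
Qed.
End Equiv2.

Section Triv.
Variables (k : fieldType) (A : gradedAlg k) (hA : connected_graded A).
Lemma eps_ex (a : galg A) : exists c : k, gdeg 0 a = c%:A.
Proof. by apply/(proj2 hA); exact: gdeg_idem. Qed.
Definition eps (a : galg A) : k :=
  proj1_sig (constructive_indefinite_description _ (eps_ex a)).
Lemma epsE a : gdeg 0 a = (eps a)%:A.
Proof. by rewrite /eps; case: constructive_indefinite_description. Qed.
Lemma eps_lin : lin (eps : galg A -> k^o).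
Proof.
move=> c a b; change (eps (c *: a + b) = c * eps a + eps b); apply: (@alg_inj _ A).
by rewrite -epsE (gdeg_lin 0) !epsE /= scalerDl scalerA.
Qed.
Lemma algM (c d : k) : c%:A * d%:A = (c * d)%:A :> galg A.
Proof. by rewrite mulr_algl scalerA. Qed.

Lemma deg0_mul (a b : galg A) : gdeg 0 (a * b) = gdeg 0 a * gdeg 0 b.
Proof.
have T : forall i j, gdeg 0 (gdeg i a * gdeg j b) = gdeg 0 (gdeg i a) * gdeg 0 (gdeg j b).
  move=> i j.
  case: (boolP (i < 0)) => [ilt|ige].
    by rewrite (proj1 hA _ ilt) !mul0r (lin0 (gdeg_lin 0)) mul0r.
  case: (boolP (j < 0)) => [jlt|jge].
    by rewrite (proj1 hA _ jlt) !mulr0 (lin0 (gdeg_lin 0)) mulr0.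
  have hm := gdeg_mul (gdeg_idem i a) (gdeg_idem j b).
  rewrite -hm gdeg_qq hm !gdeg_qq.
  case: (eqVneq i 0) => [->|ni].
    by case: (eqVneq j 0) => [->|nj]; rewrite ?add0r ?eqxx ?mulr0 // eq_sym (negPf nj).
  rewrite mul0r; case: ifP => // /eqP h; exfalso; lia.
have [s [us hs ha]] := gr_supp (gdeg_grading A) a.
have [t [ut ht hb]] := gr_supp (gdeg_grading A) b.
have -> : a * b = \sum_(i <- s) \sum_(j <- t) gdeg i a * gdeg j b.
  by rewrite {1}ha {1}hb mulr_suml; apply: eq_bigr => i _; rewrite mulr_sumr.
rewrite {2}ha {2}hb !(lin_sum (gdeg_lin 0)) mulr_suml; apply: eq_bigr => i _.
by rewrite (lin_sum (gdeg_lin 0)) mulr_sumr; apply: eq_bigr => j _; rewrite T.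
Qed.

Lemma eps_mul a b : eps (a * b) = eps a * eps b.
Proof. by apply: (@alg_inj _ A); rewrite -epsE deg0_mul !epsE algM. Qed.
Lemma eps1 : eps 1 = 1.
Proof. by apply: (@alg_inj _ A); rewrite -epsE one_homog // scale1r. Qed.
Lemma eps_homog j a : homog j a -> j != 0 -> eps a = 0.
Proof.
move=> ha nj; apply: (@alg_inj _ A); rewrite -epsE scale0r -ha gdeg_qq.
by rewrite eq_sym (negPf nj).
Qed.
Lemma eps_deg0 a : eps (gdeg 0 a) = eps a.
Proof. by apply: (@alg_inj _ A); rewrite -!epsE gdeg_idem. Qed.

Variable n : int.
Definition tact (m : k^o) (a : galg A) : k^o := m * eps a.
Definition tq (i : int) (m : k^o) : k^o := if i == n then m else 0.
Lemma triv_is_gmod : is_gmod tact tq.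
Proof.
rewrite /tact /tq; split.
- split=> [a c u v|m c u v] /=; first by rewrite mulrDl scalerAl.
  by rewrite (eps_lin c u v) mulrDr scalerAr.
- by split=> [m|m a b]; rewrite ?eps1 ?mulr1 // eps_mul mulrA.
- split=> [i c u v|i j v|v].
  + by case: ifP; rewrite ?scaler0 ?addr0.
  + case: (eqVneq i n) => [->|nin]; first by rewrite eq_sym; case: ifP.
    by case: (eqVneq i j) => [<-|//]; rewrite (negPf nin).
  + exists [:: n]; split.
    * by [].
    * by move=> i; rewrite inE => /negPf ->.
    * by rewrite big_seq1 eqxx.
- move=> i j m a hm ha.
  case: (eqVneq j 0) => [j0|nj]; last by rewrite (eps_homog ha nj) mulr0; case: ifP.
  case: (eqVneq i n) => [ein|nin]; first by rewrite j0 addr0 ein eqxx.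
  by rewrite (negPf nin) in hm; rewrite -hm mul0r; case: ifP.
Qed.
Definition trivmod : gmod A := GMod triv_is_gmod.

Definition proj_triv : ghom (shift A n) trivmod.
Proof.
refine (@GHom k A (shift A n) trivmod (eps : galg A -> k^o) _).
split.
- exact: eps_lin.
- by move=> b a /=; rewrite /tact eps_mul.
- move=> i b /=; rewrite /tq; case: (eqVneq i n) => [->|nin].
    by rewrite subrr eps_deg0.
  apply: (eps_homog (gdeg_idem _ _)); by rewrite subr_eq0.
Defined.
Lemma proj_trivE a : proj_triv a = eps a. Proof. by []. Qed.
End Triv.

Section Key.
Variables (k : fieldType) (A B : gradedAlg k) (hA : connected_graded A) (hB : connected_graded B)
  (F : gfunctor A B) (G : gfunctor B A).
Hypotheses (hF : is_klin_functor F) (hG : is_klin_functor G) (U : unit_iso F G) (U' : unit_iso G F).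


Lemma key n : exists m, giso (fobj F (shift A n)) (shift B m).
Proof.
pose P := fobj F (shift A n).
have step1 : exists m (g : ghom (fobj G (shift B m)) (shift A n)) w, eps hA (g w) != 0.
  case: (classic (exists m (g : ghom (fobj G (shift B m)) (shift A n)) w, eps hA (g w) != 0)) => // H.
  exfalso.
  have H' : forall m (g : ghom (fobj G (shift B m)) (shift A n)) w, eps hA (g w) = 0.
    move=> m g w; case: (eqVneq (eps hA (g w)) 0) => // ne; exfalso; apply: H.
    by exists m, g, w.
  have Fz : forall y : gcar P, fmor F (proj_triv hA n) y = 0.
    move=> y; have [s [us hs hy]] := gr_supp (gq_grading P) y.
    rewrite hy (lin_sum (gh_lin _)) big1 // => m _.
    have [ep [ep' [e1 e2 en]]] := U'.
    pose u := emap m (gq m y).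
    have [g hg] := full U U' (compg (ep' (shift B m)) u).
    have -> : gq m y = u 1 by rewrite emap1 (gr_idem (gq_grading P)).
    rewrite -(e1 (shift B m) 1) -[u _]/(compg (ep' (shift B m)) u _) -hg -klin_compg //.
    by apply: (klin_zero hF) => z; rewrite compgE proj_trivE H'.
  have := zero_reflect U hG Fz 1; rewrite proj_trivE eps1 //.
  by move/eqP; rewrite oner_eq0.
have [m [g [w hw]]] := step1.
pose Q := fobj G (shift B m).
pose y := gq n w.
pose c := eps hA (g w).
have gy : g y = c%:A by rewrite /y gh_q /= subrr epsE.
pose u := emap n y.
have uE : forall a, u a = gact y a by move=> a; rewrite emapE /y (gr_idem (gq_grading Q)).
have gu : forall a, g (u a) = c *: a by move=> a; rewrite uE gh_act gy /= mulr_algl.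
have [h hh] := full U' U (compg g u).
have [d hd] := shift_end hB h.
have ug : forall z, u (g z) = d *: z.
  move=> z; rewrite -[u (g z)]/(compg g u z) -hh.
  rewrite (klin_lc hG (f := idg _) (g := zerog _ _) (h := h) (c := d)); last first.
    by move=> x; rewrite hd addr0.
  by rewrite (klin_id hG) // (klin_zero hG) // addr0.
have y0 : y != 0.
  apply: contraNneq hw => y0; apply/eqP; apply: (@alg_inj _ A).
  by rewrite -/c -gy y0 gh0 scale0r.
have u1 : u 1 = y by rewrite uE act1.
have cd : c = d.
  have e1 := ug (u 1).
  have e2 : u (g (u 1)) = c *: u 1 by rewrite gu; exact: gh_Z.
  move: e1; rewrite e2 u1 => /eqP.
  by rewrite -subr_eq0 -scalerBl scaler_eq0 (negPf y0) orbF subr_eq0 => /eqP.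
have c0 : c != 0 by [].
have isoQ : giso (shift A n) Q.
  exists u, (lcg c^-1 g (zerog _ _)); split=> x; rewrite lcgE zerogE addr0.
    by rewrite gu scalerA mulVf // scale1r.
  by rewrite gh_Z ug -cd scalerA mulVf // scale1r.
exists m; apply: giso_trans (fiso hF isoQ) _.
exact: giso_sym (unit_giso U' (shift B m)).
Qed.
End Key.

Lemma int_shift (s : int -> int) : (forall n, s n < s (n + 1)) ->
  (forall m, exists n, s n = m) -> forall n, s n = n + s 0.
Proof.
move=> sinc ssurj.
have up : forall (j : nat) n, s n + j%:Z <= s (n + j%:Z).
  elim=> [|j IH] n; first by rewrite !addr0.
  have := IH n; have := sinc (n + j%:Z).
  have -> : n + j.+1%:Z = n + j%:Z + 1 by lia.
  lia.
have step : forall n, s (n + 1) = s n + 1.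
  move=> n; have h1 := sinc n.
  have [k hk] := ssurj (s n + 1).
  case: (lerP k n) => kn.
    have [j hj] : exists j : nat, n = k + j%:Z by exists (absz (n - k)); lia.
    have := up j k; rewrite -hj hk; lia.
  have [j hj] : exists j : nat, k = n + 1 + j%:Z by exists (absz (k - (n + 1))%R); lia.
  have := up j (n + 1); rewrite -hj hk; move=> h2; move: h1; set t := s (n + 1) in h2 *; lia.
elim/int_rec => [|j IH|j IH]; first by rewrite add0r.
  have := step j%:Z; rewrite IH; have -> : j.+1%:Z = j%:Z + 1 by lia.
  by move=> ->; lia.
have := step (- j.+1%:Z); have -> : - j.+1%:Z + 1 = - j%:Z by lia.
rewrite IH; lia.
Qed.

Section Trans.
Variables (k : fieldType) (A B : gradedAlg k) (hA : connected_graded A) (hB : connected_graded B)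
  (F : gfunctor A B) (G : gfunctor B A).
Hypotheses (hF : is_klin_functor F) (U : unit_iso F G) (U' : unit_iso G F).
Variable c : int.
Variables (th : forall n, ghom (fobj F (shift A n)) (shift B (n + c)))
          (th' : forall n, ghom (shift B (n + c)) (fobj F (shift A n))).
Hypotheses (thK : forall n x, th' n (th n x) = x) (th'K : forall n y, th n (th' n y) = y).

Definition Em i j (a : galg A) : ghom (shift A j) (shift A i) := @emap k A (shift A i) j a.
Lemma EmE i j a x : Em i j a x = gdeg (j - i) a * x. Proof. by []. Qed.
Definition Psi i j a : ghom (shift B (j + c)) (shift B (i + c)) :=
  compg (th' j) (compg (fmor F (Em i j a)) (th i)).
Definition phi i j (a : galg A) : galg B := Psi i j a 1.
Lemma PsiE i j a y : Psi i j a y = phi i j a * y.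
Proof. by rewrite /phi shift_det. Qed.

Lemma phi_lin i j : lin (phi i j).
Proof.
move=> d a b; rewrite /phi /Psi !compgE.
rewrite (klin_lc hF (f := Em i j a) (g := Em i j b) (h := Em i j (d *: a + b)) (c := d)).
  exact: (gh_lin (th i)).
move=> x; rewrite !EmE (gdeg_lin (j - i)) mulrDl; congr (_ + _).
by rewrite -scalerAl.
Qed.

Lemma phi_homog i j a : homog (j - i) (phi i j a).
Proof.
rewrite /homog /phi /Psi.
have h := shift_h1 hB (Psi i j a).
by move: h; rewrite /= (_ : j + c - (i + c) = j - i) //; ring.
Qed.

Lemma Em_det i j (f : ghom (shift A j) (shift A i)) : f = Em i j (f 1).
Proof. exact: shift_E. Qed.

Lemma phi_inj i j a a' : homog (j - i) a -> homog (j - i) a' -> phi i j a = phi i j a' -> a = a'.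
Proof.
move=> ha ha' e.
have eP : forall y, Psi i j a y = Psi i j a' y by move=> y; rewrite !PsiE e.
have eF : forall y, fmor F (Em i j a) y = fmor F (Em i j a') y.
  move=> y; rewrite -(thK (fmor F (Em i j a) y)) -(thK (fmor F (Em i j a') y)).
  rewrite -(thK y).
  have := eP (th j y); rewrite /Psi !compgE => ->; done.
have := faithful U eF 1; rewrite !EmE !mulr1 /homog in ha ha' *.
by rewrite ha ha'.
Qed.

Lemma phi_surj i j b : homog (j - i) b -> exists2 a, homog (j - i) a & phi i j a = b.
Proof.
move=> hb.
pose Eb : ghom (shift B (j + c)) (shift B (i + c)) := @emap k B (shift B (i + c)) (j + c) b.
have [f hf] := full U U' (compg (th j) (compg Eb (th' i))).
exists (f 1).
  have := shift_h1 hA f; rewrite /homog /=; exact.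
rewrite /phi /Psi !compgE -(Em_det f) hf !compgE !th'K.
rewrite /Eb emap1 /= (_ : j + c - (i + c) = j - i); last by ring.
by rewrite hb.
Qed.

Lemma phi_mul i j l a b : homog (j - i) a -> homog (l - j) b ->
  phi i l (a * b) = phi i j a * phi j l b.
Proof.
move=> ha hb.
have hab : homog (l - i) (a * b).
  have -> : l - i = (j - i) + (l - j) by ring.
  exact: gdeg_mul.
have eE : forall x, Em i l (a * b) x = Em i j a (Em j l b x).
  by move=> x; rewrite !EmE ha hb hab mulrA.
rewrite -PsiE /phi /Psi !compgE (klin_comp hF eE) thK.
done.
Qed.

Lemma phi_one i : phi i i 1 = 1.
Proof.
rewrite /phi /Psi !compgE (klin_id hF) ?th'K // => x.
by rewrite EmE subrr one_homog // mul1r.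
Qed.

Lemma trans_zbar : zbar_iso A B.
Proof.
exists phi; split.
- exact: phi_lin.
- move=> i j a _; exact: phi_homog.
- exact: phi_inj.
- exact: phi_surj.
- split; [exact: phi_mul | exact: phi_one].
Qed.
End Trans.

Lemma shift_iso_eq (k : fieldType) (C : gradedAlg k) (hC : connected_graded C) m m' :
  giso (shift C m) (shift C m') -> m = m'.
Proof.
case=> f [g [fK gK]]; case: (ltrgtP m m') => // lt; exfalso.
  have f1 := shift_neg hC f lt 1.
  by have := fK 1; rewrite f1 gh0 => /esym/eqP; rewrite oner_eq0.
have g1 := shift_neg hC g lt 1.
by have := gK 1; rewrite g1 gh0 => /esym/eqP; rewrite oner_eq0.
Qed.

Section Final1.
Variables (k : fieldType) (A B : gradedAlg k) (hA : connected_graded A) (hB : connected_graded B).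

Lemma zbar_of_shift_equiv (F : gfunctor A B) (G : gfunctor B A) (hF : is_klin_functor F)
  (U : unit_iso F G) (U' : unit_iso G F) (c : int) :
  (forall n, giso (fobj F (shift A n)) (shift B (n + c))) -> zbar_iso A B.
Proof.
move=> H.
pose th n := proj1_sig (constructive_indefinite_description _ (H n)).
pose th' n := proj1_sig (constructive_indefinite_description _
                (proj2_sig (constructive_indefinite_description _ (H n)))).
have hK : forall n, (forall x, th' n (th n x) = x) /\ (forall y, th n (th' n y) = y).
  move=> n; exact: (proj2_sig (constructive_indefinite_description _
                (proj2_sig (constructive_indefinite_description _ (H n))))).
exact: (trans_zbar hA hB hF U U' (fun n x => proj1 (hK n) x) (fun n y => proj2 (hK n) y)).
Qed.

Hypothesis hA1 : exists a : galg A, gdeg 1 a != 0.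

Lemma equiv_zbar : gr_equiv A B -> zbar_iso A B.
Proof.
case=> F [hF [G [hG U U']]].
pose sg n := proj1_sig (constructive_indefinite_description _ (key hA hB hF hG U U' n)).
have sgP : forall n, giso (fobj F (shift A n)) (shift B (sg n)).
  move=> n; exact: (proj2_sig (constructive_indefinite_description _ (key hA hB hF hG U U' n))).
have inj : forall n n', sg n = sg n' -> n = n'.
  move=> n n' e; apply: (shift_iso_eq hA); apply: (iso_reflect U U' hF).
  apply: giso_trans (sgP n) _; rewrite e; exact: giso_sym (sgP n').
have mono : forall n, sg n <= sg (n + 1).
  move=> n; case: (lerP (sg n) (sg (n + 1))) => // lt; exfalso.
  have [a0 ha0] := hA1.
  pose lam := Em n (n + 1) (gdeg 1 a0).
  have [f1 [g1 [f1K g1K]]] := sgP (n + 1).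
  have [f0 [g0 [f0K g0K]]] := sgP n.
  pose h := compg g1 (compg (fmor F lam) f0).
  have hz := shift_neg hB h lt.
  have Fz : forall y, fmor F lam y = 0.
    move=> y; have := hz (f1 y); rewrite /h !compgE f1K => e.
    by rewrite -(f0K (fmor F lam y)) e gh0.
  have := zero_reflect U hG Fz 1; rewrite /lam EmE mulr1.
  rewrite (_ : n + 1 - n = 1) ?gdeg_idem; last by ring.
  by move/eqP; rewrite (negPf ha0).
have strict : forall n, sg n < sg (n + 1).
  move=> n; rewrite Order.POrderTheory.lt_neqAle mono andbT; apply/eqP => /inj; lia.
have surj : forall m, exists n, sg n = m.
  move=> m; have [n hn] := key hB hA hG hF U' U m.
  exists n; apply: esym (shift_iso_eq hB _).
  apply: giso_trans (unit_giso U' (shift B m)) _.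
  exact: giso_trans (fiso hF hn) (sgP n).
have sgE := int_shift strict surj.
apply: (zbar_of_shift_equiv hF U U' (c := sg 0)) => n.
rewrite -sgE; exact: sgP.
Qed.
End Final1.

Section Supp.
Variables (k : fieldType) (V : lmodType k) (q : int -> V -> V) (hq : is_grading q).
Definition supp (v : V) : seq int :=
  proj1_sig (constructive_indefinite_description _ (gr_supp hq v)).
Lemma supp_uniq v : uniq (supp v).
Proof. by rewrite /supp; case: (constructive_indefinite_description _ _) => s [] /=. Qed.
Lemma supp_out v i : i \notin supp v -> q i v = 0.
Proof. by rewrite /supp; case: (constructive_indefinite_description _ _) => s [_ h _] /=; apply: h. Qed.
Lemma supp_decomp v : v = \sum_(i <- supp v) q i v.
Proof. apply: (gr_decomp hq (supp_uniq v)) => i; exact: supp_out. Qed.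
End Supp.

Lemma notin_undup (i : int) s1 s2 : i \notin undup (s1 ++ s2) -> (i \notin s1) /\ (i \notin s2).
Proof. by rewrite mem_undup mem_cat negb_or => /andP. Qed.

Section Twist.
Variables (k : fieldType) (A B : gradedAlg k) (hB : connected_graded B).
Variable psi : int -> int -> galg B -> galg A.
Hypotheses (psiL : forall i j, lin (psi i j))
  (psiH : forall i j b, homog (j - i) b -> homog (j - i) (psi i j b))
  (psiM : forall i j l b b', homog (j - i) b -> homog (l - j) b' ->
      psi i l (b * b') = psi i j b * psi j l b')
  (psiO : forall i, psi i i 1 = 1).

Lemma psiH' i d b : homog d b -> homog d (psi i (i + d) b).
Proof. by move=> h; have := @psiH i (i + d) b; rewrite (_ : i + d - i = d) //; [apply | ring]. Qed.

Section TwM.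
Variable M : gmod A.
Definition tw_act (m : gcar M) (b : galg B) : gcar M :=
  \sum_(i <- supp (gq_grading M) m) \sum_(d <- supp (gdeg_grading B) b)
     gact (gq i m) (psi i (i + d) (gdeg d b)).

Lemma tw_any s t m b : uniq s -> uniq t -> (forall i, i \notin s -> gq i m = 0) ->
  (forall d, d \notin t -> gdeg d b = 0) ->
  tw_act m b = \sum_(i <- s) \sum_(d <- t) gact (gq i m) (psi i (i + d) (gdeg d b)).
Proof.
move=> us ut hs ht; rewrite /tw_act.
rewrite (sum_supp (supp_uniq _ _) us); first last.
- by move=> i /hs ->; apply: big1 => d _; rewrite (lin0 (act_linl _)).
- by move=> i /supp_out ->; apply: big1 => d _; rewrite (lin0 (act_linl _)).
apply: eq_bigr => i _; apply: sum_supp => //; first exact: supp_uniq.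
- by move=> d /supp_out ->; rewrite (lin0 (psiL _ _)) (lin0 (act_linr _)).
- by move=> d /ht ->; rewrite (lin0 (psiL _ _)) (lin0 (act_linr _)).
Qed.

Lemma tw_hom i d m b : gq i m = m -> homog d b -> tw_act m b = gact m (psi i (i + d) b).
Proof.
move=> hm hb; rewrite (tw_any (s := [:: i]) (t := [:: d])) //.
- by rewrite !big_seq1 hm hb.
- by move=> j; rewrite inE => nj; apply: (gr_homog (gq_grading M) hm).
- by move=> e; rewrite inE => ne; apply: (gr_homog (gdeg_grading B) hb).
Qed.

Lemma tw_linl b : lin (fun m => tw_act m b).
Proof.
move=> c u v /=.
set s := undup (supp (gq_grading M) u ++ supp (gq_grading M) v).
have us : uniq s by exact: undup_uniq.
have hu : forall i, i \notin s -> gq i u = 0.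
  by move=> i /notin_undup [/supp_out -> _].
have hv : forall i, i \notin s -> gq i v = 0.
  by move=> i /notin_undup [_ /supp_out ->].
have huv : forall i, i \notin s -> gq i (c *: u + v) = 0.
  by move=> i h; rewrite (gq_lin i) hu // hv // scaler0 addr0.
have ut := supp_uniq (gdeg_grading B) b.
have ht := @supp_out _ _ _ (gdeg_grading B) b.
rewrite (tw_any us ut huv ht) (tw_any us ut hu ht) (tw_any us ut hv ht).
rewrite scaler_sumr -big_split; apply: eq_bigr => i _.
rewrite scaler_sumr -big_split; apply: eq_bigr => d _.
by rewrite (gq_lin i) (act_linl _).
Qed.

Lemma tw_linr m : lin (tw_act m).
Proof.
move=> c u v /=.
set t := undup (supp (gdeg_grading B) u ++ supp (gdeg_grading B) v).
have ut : uniq t by exact: undup_uniq.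
have hu : forall i, i \notin t -> gdeg i u = 0.
  by move=> i /notin_undup [/supp_out -> _].
have hv : forall i, i \notin t -> gdeg i v = 0.
  by move=> i /notin_undup [_ /supp_out ->].
have huv : forall i, i \notin t -> gdeg i (c *: u + v) = 0.
  by move=> i h; rewrite (gdeg_lin i) hu // hv // scaler0 addr0.
have us := supp_uniq (gq_grading M) m.
have hs := @supp_out _ _ _ (gq_grading M) m.
rewrite (tw_any us ut hs huv) (tw_any us ut hs hu) (tw_any us ut hs hv).
rewrite scaler_sumr -big_split; apply: eq_bigr => i _.
rewrite scaler_sumr -big_split; apply: eq_bigr => d _.
by rewrite (gdeg_lin d) (psiL _ _) (act_linr _).
Qed.

Lemma tw_sum_l s m b : uniq s -> (forall i, i \notin s -> gq i m = 0) ->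
  tw_act m b = \sum_(i <- s) tw_act (gq i m) b.
Proof.
move=> us hs; rewrite {1}(gr_decomp (gq_grading M) us hs).
exact: (lin_sum (tw_linl b)).
Qed.

Lemma tw_sum_r t m b : uniq t -> (forall d, d \notin t -> gdeg d b = 0) ->
  tw_act m b = \sum_(d <- t) tw_act m (gdeg d b).
Proof.
move=> ut ht; rewrite {1}(gr_decomp (gdeg_grading B) ut ht).
exact: (lin_sum (tw_linr m)).
Qed.

Lemma tw1 m : tw_act m 1 = m.
Proof.
rewrite (@tw_sum_l _ m 1 (supp_uniq (gq_grading M) m) (@supp_out _ _ _ (gq_grading M) m)).
apply: esym; rewrite {1}(supp_decomp (gq_grading M) m); apply: eq_bigr => i _; apply: esym.
rewrite (tw_hom (gr_idem (gq_grading M) i m) (one_homog hB)).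
by rewrite addr0 psiO act1.
Qed.

Lemma twA m b b' : tw_act (tw_act m b) b' = tw_act m (b * b').
Proof.
have us := supp_uniq (gq_grading M) m.
have hs := @supp_out _ _ _ (gq_grading M) m.
have ut := supp_uniq (gdeg_grading B) b.
have ht := @supp_out _ _ _ (gdeg_grading B) b.
have ut' := supp_uniq (gdeg_grading B) b'.
have ht' := @supp_out _ _ _ (gdeg_grading B) b'.
have eR := @tw_sum_l _ m (b * b') us hs.
have ebb : b * b' = \sum_(d <- supp (gdeg_grading B) b) \sum_(e <- supp (gdeg_grading B) b')
                       gdeg d b * gdeg e b'.
  rewrite {1}(gr_decomp (gdeg_grading B) ut ht) {1}(gr_decomp (gdeg_grading B) ut' ht').
  by rewrite mulr_suml; apply: eq_bigr => d _; rewrite mulr_sumr.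
rewrite eR (tw_any us ut hs ht) (lin_sum (tw_linl b')); apply: eq_bigr => i _.
rewrite ebb (lin_sum (tw_linr _)) (lin_sum (tw_linl b')); apply: eq_bigr => d _.
rewrite (lin_sum (tw_linr _)) (@tw_sum_r _ _ b' ut' ht'); apply: eq_bigr => e _.
have hd : homog d (psi i (i + d) (gdeg d b)) by apply: psiH'; exact: gdeg_idem.
have hq : gq (i + d) (gact (gq i m) (psi i (i + d) (gdeg d b))) =
          gact (gq i m) (psi i (i + d) (gdeg d b)).
  exact: gq_act (gr_idem (gq_grading M) i m) hd.
rewrite (tw_hom hq (gdeg_idem e b')) actA.
have hde : homog (d + e) (gdeg d b * gdeg e b').
  exact: gdeg_mul (gdeg_idem d b) (gdeg_idem e b').
rewrite (tw_hom (gr_idem (gq_grading M) i m) hde) addrA.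
rewrite (psiM (j := i + d)) //.
- rewrite /homog (_ : i + d - i = d); [exact: gdeg_idem | ring].
- rewrite /homog (_ : i + d + e - (i + d) = e); [exact: gdeg_idem | ring].
Qed.

Lemma tw_q i j m b : gq i m = m -> homog j b -> gq (i + j) (tw_act m b) = tw_act m b.
Proof. by move=> hm hb; rewrite (tw_hom hm hb); apply: gq_act hm (psiH' i hb). Qed.

Lemma tw_is_gmod : is_gmod tw_act (@gq _ _ M).
Proof.
split.
- by split; [exact: tw_linl | exact: tw_linr].
- by split; [exact: tw1 | exact: twA].
- exact: gq_grading.
- exact: tw_q.
Qed.
End TwM.

Definition Tw (M : gmod A) : gmod B := GMod (tw_is_gmod M).

Definition twh (M N : gmod A) (f : ghom M N) : ghom (Tw M) (Tw N).
Proof.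
refine (@GHom k B (Tw M) (Tw N) (fun x => f x) _).
split.
- move=> c u v /=; exact: (gh_lin f).
- move=> m b /=.
  have us := supp_uniq (gq_grading M) m.
  have hs := @supp_out _ _ _ (gq_grading M) m.
  have ut := supp_uniq (gdeg_grading B) b.
  have ht := @supp_out _ _ _ (gdeg_grading B) b.
  have hs' : forall i, i \notin supp (gq_grading M) m -> gq i (f m) = 0.
    by move=> i /hs h; rewrite -gh_q h gh0.
  rewrite (tw_any us ut hs ht) (tw_any us ut hs' ht) gh_sum; apply: eq_bigr => i _.
  by rewrite gh_sum; apply: eq_bigr => d _; rewrite gh_act gh_q.
- move=> i m /=; exact: gh_q.
Defined.

Definition Twf : gfunctor A B := GFunctor twh.

Lemma Twf_klin : is_klin_functor Twf.
Proof. by split => /= *; auto. Qed.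
End Twist.

Section HG.
Variables (k : fieldType) (C : gradedAlg k) (M N : gmod C) (chi : int -> gcar M -> gcar N).
Hypotheses (chiL : forall i, lin (chi i))
  (chiH : forall i m, gq i m = m -> gq i (chi i m) = chi i m)
  (chiA : forall i d m c, gq i m = m -> homog d c -> chi (i + d) (gact m c) = gact (chi i m) c).

Definition hgf (m : gcar M) : gcar N := \sum_(i <- supp (gq_grading M) m) chi i (gq i m).

Lemma hg_any s m : uniq s -> (forall i, i \notin s -> gq i m = 0) ->
  hgf m = \sum_(i <- s) chi i (gq i m).
Proof.
move=> us hs; apply: sum_supp => //; first exact: supp_uniq.
- by move=> i /supp_out ->; rewrite (lin0 (chiL i)).
- by move=> i /hs ->; rewrite (lin0 (chiL i)).
Qed.

Lemma hg_hom i m : gq i m = m -> hgf m = chi i m.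
Proof.
move=> hm; rewrite (@hg_any [:: i]) // ?big_seq1 ?hm //.
by move=> j; rewrite inE => nj; apply: (gr_homog (gq_grading M) hm).
Qed.

Lemma hg_lin : lin hgf.
Proof.
move=> c u v.
set s := undup (supp (gq_grading M) u ++ supp (gq_grading M) v).
have us : uniq s by exact: undup_uniq.
have hu : forall i, i \notin s -> gq i u = 0.
  by move=> i /notin_undup [/supp_out -> _].
have hv : forall i, i \notin s -> gq i v = 0.
  by move=> i /notin_undup [_ /supp_out ->].
have huv : forall i, i \notin s -> gq i (c *: u + v) = 0.
  by move=> i h; rewrite (gq_lin i) hu // hv // scaler0 addr0.
rewrite (hg_any us huv) (hg_any us hu) (hg_any us hv).
rewrite scaler_sumr -big_split; apply: eq_bigr => i _.
by rewrite (gq_lin i) (chiL i).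
Qed.

Lemma hg_act m c : hgf (gact m c) = gact (hgf m) c.
Proof.
have us := supp_uniq (gq_grading M) m.
have hs := @supp_out _ _ _ (gq_grading M) m.
have ut := supp_uniq (gdeg_grading C) c.
have ht := @supp_out _ _ _ (gdeg_grading C) c.
have e1 : gact m c = \sum_(i <- supp (gq_grading M) m) \sum_(d <- supp (gdeg_grading C) c)
                        gact (gq i m) (gdeg d c).
  rewrite {1}(gr_decomp (gq_grading M) us hs) (lin_sum (act_linl c)).
  apply: eq_bigr => i _; rewrite {1}(gr_decomp (gdeg_grading C) ut ht).
  exact: (lin_sum (act_linr _)).
rewrite e1 (lin_sum hg_lin) (hg_any us hs) (lin_sum (act_linl c)).
apply: eq_bigr => i _; rewrite (lin_sum hg_lin).
rewrite {3}(gr_decomp (gdeg_grading C) ut ht) (lin_sum (act_linr _)).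
apply: eq_bigr => d _.
have hq := gq_act (gr_idem (gq_grading M) i m) (gdeg_idem d c).
by rewrite (hg_hom hq); apply: chiA; [exact: (gr_idem (gq_grading M)) | exact: gdeg_idem].
Qed.

Lemma hg_q i m : hgf (gq i m) = gq i (hgf m).
Proof.
have us := supp_uniq (gq_grading M) m.
have hs := @supp_out _ _ _ (gq_grading M) m.
rewrite (hg_hom (gr_idem (gq_grading M) i m)) (hg_any us hs) (lin_sum (gq_lin i)).
under eq_bigr => j _ do rewrite -{1}(chiH (gr_idem (gq_grading M) j m)) (gr_qq (gq_grading N))
  (chiH (gr_idem (gq_grading M) j m)).
under eq_bigr => j _ do rewrite eq_sym.
rewrite (sum_single (fun j => chi j (gq j m))) //.
by case: ifP => // /negbT /hs ->; rewrite (lin0 (chiL i)).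
Qed.

Definition hg : ghom M N.
Proof.
refine (@GHom k C M N hgf _); split.
- exact: hg_lin.
- exact: hg_act.
- exact: hg_q.
Defined.
Lemma hgE m : hg m = hgf m. Proof. by []. Qed.
End HG.

Lemma hg_inv (k : fieldType) (C : gradedAlg k) (M N : gmod C)
  (chi : int -> gcar M -> gcar N) chiL chiH chiA
  (chi' : int -> gcar N -> gcar M) chi'L chi'H chi'A :
  (forall i m, gq i m = m -> chi' i (chi i m) = m) ->
  forall m, @hg k C N M chi' chi'L chi'H chi'A (@hg k C M N chi chiL chiH chiA m) = m.
Proof.
move=> inv m.
have us := supp_uniq (gq_grading M) m.
have hs := @supp_out _ _ _ (gq_grading M) m.
have hs' : forall i, i \notin supp (gq_grading M) m -> gq i (hg chiL chiH chiA m) = 0.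
  by move=> i /hs h; rewrite -gh_q h gh0.
rewrite hgE (hg_any chi'L us hs') [in RHS](gr_decomp (gq_grading M) us hs).
apply: eq_bigr => i _; rewrite -gh_q hgE (hg_hom chiL (gr_idem (gq_grading M) i m)).
exact: inv (gr_idem (gq_grading M) i m).
Qed.

Section Unit.
Variables (k : fieldType) (A B : gradedAlg k) (hA : connected_graded A) (hB : connected_graded B).
Variable psi : int -> int -> galg B -> galg A.
Hypotheses (psiL : forall i j, lin (psi i j))
  (psiH : forall i j b, homog (j - i) b -> homog (j - i) (psi i j b))
  (psiM : forall i j l b b', homog (j - i) b -> homog (l - j) b' ->
      psi i l (b * b') = psi i j b * psi j l b')
  (psiO : forall i, psi i i 1 = 1).
Variable phi : int -> int -> galg A -> galg B.
Hypotheses (phiL : forall i j, lin (phi i j))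
  (phiH : forall i j a, homog (j - i) a -> homog (j - i) (phi i j a))
  (phiM : forall i j l a a', homog (j - i) a -> homog (l - j) a' ->
      phi i l (a * a') = phi i j a * phi j l a')
  (phiO : forall i, phi i i 1 = 1).
Hypothesis psi_phi : forall i j a, homog (j - i) a -> psi i j (phi i j a) = a.

Let F := Twf hB psiL psiH psiM psiO.
Let G := Twf hA phiL phiH phiM phiO.

Lemma act_GF (M : gmod A) i d (m : gcar M) a : gq i m = m -> homog d a ->
  @gact k A (fobj G (fobj F M)) m a = gact m a.
Proof.
move=> hm ha /=.
rewrite (tw_hom phiL (M := fobj F M) hm ha) /=.
rewrite (tw_hom psiL hm (psiH' phiH i ha)).
rewrite psi_phi //; rewrite (_ : i + d - i = d) //; ring.
Qed.

Definition eta (M : gmod A) : ghom M (fobj G (fobj F M)).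
Proof.
refine (@hg k A M (fobj G (fobj F M)) (fun i x => x) _ _ _).
- by move=> i c u v.
- by move=> i m h.
- by move=> i d m c hm hc; rewrite (act_GF hm hc).
Defined.
Lemma etaE M x : eta M x = x.
Proof. by rewrite /eta hgE /hgf [RHS](supp_decomp (gq_grading M) x). Qed.

Definition eta' (M : gmod A) : ghom (fobj G (fobj F M)) M.
Proof.
refine (@hg k A (fobj G (fobj F M)) M (fun i x => x) _ _ _).
- by move=> i c u v.
- by move=> i m h.
- by move=> i d m c hm hc; exact: (act_GF (M := M) hm hc).
Defined.
Lemma eta'E M x : eta' M x = x.
Proof. by rewrite /eta' hgE /hgf [RHS](supp_decomp (gq_grading (fobj G (fobj F M))) x). Qed.

Lemma tw_unit : unit_iso F G.
Proof.
exists eta, eta'; split.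
- by move=> M x; rewrite etaE eta'E.
- by move=> M x; rewrite eta'E etaE.
- by move=> M M' f x; rewrite !etaE.
Qed.
End Unit.

Section ShiftIso.
Variables (k : fieldType) (A B : gradedAlg k) (hB : connected_graded B).
Variable psi : int -> int -> galg B -> galg A.
Hypotheses (psiL : forall i j, lin (psi i j))
  (psiH : forall i j b, homog (j - i) b -> homog (j - i) (psi i j b))
  (psiM : forall i j l b b', homog (j - i) b -> homog (l - j) b' ->
      psi i l (b * b') = psi i j b * psi j l b')
  (psiO : forall i, psi i i 1 = 1).
Variable phi : int -> int -> galg A -> galg B.
Hypotheses (phiL : forall i j, lin (phi i j))
  (phiH : forall i j a, homog (j - i) a -> homog (j - i) (phi i j a))
  (phiM : forall i j l a a', homog (j - i) a -> homog (l - j) a' ->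
      phi i l (a * a') = phi i j a * phi j l a').
Hypothesis psi_phi : forall i j a, homog (j - i) a -> psi i j (phi i j a) = a.
Hypothesis phi_psi : forall i j b, homog (j - i) b -> phi i j (psi i j b) = b.

Let F := Twf hB psiL psiH psiM psiO.

Lemma tw_shift_iso n : giso (fobj F (shift A n)) (shift B n).
Proof.
have h1 : forall i d : int, i + d - i = d by move=> i d; ring.
unshelve eexists (@hg k B (fobj F (shift A n)) (shift B n) (fun i a => phi n i a) _ _ _).
- by move=> i; exact: phiL.
- by move=> i a h; exact: phiH.
- move=> i d a b ha hb /=.
  rewrite (tw_hom psiL (M := shift A n) ha hb) /=.
  rewrite (phiM (j := i)) // ?phi_psi //; rewrite /homog ?h1 //.
  by have := psiH' psiH i hb.
unshelve eexists (@hg k B (shift B n) (fobj F (shift A n)) (fun i b => psi n i b) _ _ _).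
- by move=> i; exact: psiL.
- by move=> i b h; exact: psiH.
- move=> i d b c hb hc /=.
  have hb' : gq i (psi n i b : gcar (shift A n)) = psi n i b by exact: psiH.
  rewrite (tw_hom psiL (M := shift A n) hb' hc) /=.
  by rewrite (psiM (j := i)) // /homog h1.
split; apply: hg_inv.
- by move=> i a h; apply: psi_phi.
- by move=> i b h; apply: phi_psi.
Qed.
End ShiftIso.

Section FromZbar.
Variables (k : fieldType) (A B : gradedAlg k) (hA : connected_graded A) (hB : connected_graded B).
Variable phi : int -> int -> galg A -> galg B.
Hypotheses (phiL : forall i j, lin (phi i j))
  (phiH : forall i j a, homog (j - i) a -> homog (j - i) (phi i j a))
  (phiI : forall i j a a', homog (j - i) a -> homog (j - i) a' -> phi i j a = phi i j a' -> a = a')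
  (phiS : forall i j b, homog (j - i) b -> exists2 a, homog (j - i) a & phi i j a = b)
  (phiM : forall i j l a a', homog (j - i) a -> homog (l - j) a' ->
      phi i l (a * a') = phi i j a * phi j l a')
  (phiO : forall i, phi i i 1 = 1).

Lemma psi_ex i j b : exists a, homog (j - i) a /\ phi i j a = gdeg (j - i) b.
Proof. by have [a ha e] := phiS (gdeg_idem (j - i) b); exists a. Qed.
Definition psi i j b := proj1_sig (constructive_indefinite_description _ (psi_ex i j b)).
Lemma psiP i j b : homog (j - i) (psi i j b) /\ phi i j (psi i j b) = gdeg (j - i) b.
Proof. exact: (proj2_sig (constructive_indefinite_description _ (psi_ex i j b))). Qed.

Lemma phi_psi i j b : homog (j - i) b -> phi i j (psi i j b) = b.
Proof. by move=> hb; rewrite (psiP i j b).2. Qed.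
Lemma psi_phi i j a : homog (j - i) a -> psi i j (phi i j a) = a.
Proof.
move=> ha; apply: (phiI (psiP i j _).1 ha).
by rewrite (psiP i j _).2; exact: phiH.
Qed.
Lemma psiL i j : lin (psi i j).
Proof.
move=> c u v; apply: (phiI (psiP i j _).1).
- by rewrite /homog (gdeg_lin (j - i)) (psiP i j u).1 (psiP i j v).1.
- by rewrite (psiP i j _).2 (phiL i j) !(psiP i j _).2 (gdeg_lin (j - i)).
Qed.
Lemma psiH i j b : homog (j - i) b -> homog (j - i) (psi i j b).
Proof. by move=> _; exact: (psiP i j b).1. Qed.
Lemma psiM i j l b b' : homog (j - i) b -> homog (l - j) b' ->
      psi i l (b * b') = psi i j b * psi j l b'.
Proof.
move=> hb hb'.
have e : l - i = (j - i) + (l - j) by ring.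
apply: (phiI (psiP i l _).1).
- by rewrite e; apply: gdeg_mul; [exact: (psiP i j b).1 | exact: (psiP j l b').1].
rewrite (psiP i l _).2 (phiM (psiP i j b).1 (psiP j l b').1) !phi_psi //.
by rewrite e; apply: gdeg_mul.
Qed.
Lemma psiO i : psi i i 1 = 1.
Proof.
have h1 : homog (i - i) (1 : galg A) by rewrite subrr; exact: one_homog.
apply: (phiI (psiP i i _).1 h1).
by rewrite phi_psi ?phiO // subrr; exact: one_homog.
Qed.

Lemma zbar_shift_equiv : exists F : gfunctor A B,
  is_equivalence F /\ forall n, giso (fobj F (shift A n)) (shift B n).
Proof.
exists (Twf hB psiL psiH psiM psiO); split.
- split; first exact: Twf_klin.
  exists (Twf hA phiL phiH phiM phiO); split.
  + exact: Twf_klin.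
  + exact: (tw_unit hA hB psiL psiH psiM psiO phiL phiH phiM phiO psi_phi).
  + exact: (tw_unit hB hA phiL phiH phiM phiO psiL psiH psiM psiO phi_psi).
- move=> n; exact: (tw_shift_iso hB psiL psiH psiM psiO phiL phiH phiM psi_phi phi_psi).
Qed.
End FromZbar.

Unset Implicit Arguments.
Set Strict Implicit.

Theorem proposition3p4 (k : fieldType) (A B : gradedAlg k)
  (hA : connected_graded A) (hB : connected_graded B)
  (hA1 : exists a : galg A, @gdeg k A 1 a != 0) :
  (gr_equiv A B <-> zbar_iso A B) /\
  (zbar_iso A B <->
     exists F : gfunctor A B,
       is_equivalence F /\ forall n : int, giso (fobj F (shift A n)) (shift B n)).
Proof.
have z2e : zbar_iso A B -> exists F : gfunctor A B,
    is_equivalence F /\ forall n : int, giso (fobj F (shift A n)) (shift B n).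
  case=> phi [phiL phiH phiI phiS [phiM phiO]].
  exact: (zbar_shift_equiv hA hB phiL phiH phiI phiS phiM phiO).
split; split.
- exact: (equiv_zbar hA hB hA1).
- by move=> /z2e [F [hF _]]; exists F.
- exact: z2e.
- case=> F [[hF [G [hG U U']]] hsh].
  apply: (zbar_of_shift_equiv hA hB hF U U' (c := 0)) => n.
  by rewrite addr0; exact: hsh.
Qed.
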